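(* Suppose $\alpha\ge\beta$. Let $(n^{-*},n^{+*})$ be a global optimum of $\max\{\Phi_{w_{\min}}(n^-,n^+): n^-,n^+\in\mathbb{N}\cup\{0\},\ n^-+n^+=N\}$ and suppose the optimal value is positive. Then every global optimum $(w^{-*},w^{+*})$ of $P_{w_{\min}}(n^{-*},n^{+*})$ satisfies $w^{-*}_i=w_{\min}$ for all $i\in\{1,\dots,n^{-*}\}$.
   Context: Lottery with $N\in\mathbb{N}$ tickets, each outcome having probability $1/N$, and a fixed ticket price $-w_{\min}>0$. Parameters $\alpha,\beta\in(0,1)$, $\lambda>0$; value function $U(x)=x^\alpha$ for $x\ge0$, $U(x)=-\lambda(-x)^\beta$ for $x<0$. A function $f:[0,1]\to\mathbb{R}$ is inverse S-shaped if it is strictly increasing, continuously differentiable, and there is $x_0\in[0,1]$ such that $f'$ is strictly decreasing on $[0,x_0]$ and strictly increasing on $[x_0,1]$; $W^+,W^-:[0,1]\to[0,1]$ are inverse S-shaped with value $0$ at $0$ and $1$ at $1$. For $n^-+n^+=N$ let $h^-_i=W^-(i/N)-W^-((i-1)/N)$ ($i\le n^-$), $h^+_j=W^+((n^+-j+1)/N)-W^+((n^+-j)/N)$ ($j\le n^+$). Problem $P_{w_{\min}}(n^-,n^+)$: maximize $\sum_{i=1}^{n^-}(-w^-_i)-\sum_{j=1}^{n^+}w^+_j$ subject to $\sum_ih^-_iU(w^-_i)+\sum_jh^+_jU(w^+_j)\ge0$, $0\le w^+_1\le\cdots\le w^+_{n^+}$, $w_{\min}\le w^-_1\le\cdots\le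 w^-_{n^-}\le0$; $\Phi_{w_{\min}}(n^-,n^+)$ is its optimal value (zero when $n^-=0$ or $n^+=0$). *)

(* Defs.v *)
From Stdlib Require Import Reals.
From Coquelicot Require Import Coquelicot.
Open Scope R_scope.

Fixpoint sumR (n : nat) (f : nat -> R) : R :=
  match n with O => 0 | S k => sumR k f + f (S k) end.

Definition has_deriv01 (f : R -> R) (df : R) (x : R) : Prop :=
  limit1_in (fun y => (f y - f x) / (y - x))
            (fun y => 0 <= y <= 1 /\ y <> x) df x.

Definition cont01 (g : R -> R) (x : R) : Prop :=
  limit1_in g (fun y => 0 <= y <= 1) (g x) x.

Definition inverse_S_shaped (f : R -> R) : Prop :=
  (forall x y, 0 <= x <= 1 -> 0 <= y <= 1 -> x < y -> f x < f y) /\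
  exists df : R -> R,
    (forall x, 0 <= x <= 1 -> has_deriv01 f (df x) x) /\
    (forall x, 0 <= x <= 1 -> cont01 df x) /\
    exists x0, 0 <= x0 <= 1 /\
      (forall x y, 0 <= x -> x < y -> y <= x0 -> df y < df x) /\
      (forall x y, x0 <= x -> x < y -> y <= 1 -> df x < df y).

Definition weighting (W : R -> R) : Prop :=
  inverse_S_shaped W /\ W 0 = 0 /\ W 1 = 1 /\
  (forall x, 0 <= x <= 1 -> 0 <= W x <= 1).

Definition U (alpha beta lambda : R) (x : R) : R :=
  if Rlt_dec 0 x then Rpower x alpha
  else if Rlt_dec x 0 then - lambda * Rpower (- x) beta
  else 0.

Definition hminus (Wm : R -> R) (N : nat) (i : nat) : R :=
  Wm (INR i / INR N) - Wm ((INR i - 1) / INR N).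

Definition hplus (Wp : R -> R) (N np : nat) (j : nat) : R :=
  Wp ((INR np - INR j + 1) / INR N) - Wp ((INR np - INR j) / INR N).

(* feasibility for P_{wmin}(nm, np); wm, wp indexed from 1 *)
Definition feasible (N : nat) (wmin alpha beta lambda : R) (Wm Wp : R -> R)
    (nm np : nat) (wm wp : nat -> R) : Prop :=
  sumR nm (fun i => hminus Wm N i * U alpha beta lambda (wm i)) +
  sumR np (fun j => hplus Wp N np j * U alpha beta lambda (wp j)) >= 0 /\
  ((np >= 1)%nat -> 0 <= wp 1%nat) /\
  (forall j, (1 <= j < np)%nat -> wp j <= wp (S j)) /\
  ((nm >= 1)%nat -> wmin <= wm 1%nat /\ wm nm <= 0) /\
  (forall i, (1 <= i < nm)%nat -> wm i <= wm (S i)).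

Definition objective (nm np : nat) (wm wp : nat -> R) : R :=
  sumR nm (fun i => - wm i) - sumR np (fun j => wp j).

Definition is_global_opt N wmin alpha beta lambda Wm Wp nm np wm wp : Prop :=
  feasible N wmin alpha beta lambda Wm Wp nm np wm wp /\
  forall wm' wp', feasible N wmin alpha beta lambda Wm Wp nm np wm' wp' ->
    objective nm np wm' wp' <= objective nm np wm wp.

Definition Phi N wmin alpha beta lambda Wm Wp (nm np : nat) : Rbar :=
  match nm, np with
  | O, _ | _, O => Finite 0
  | _, _ => Lub_Rbar (fun v => exists wm wp,
              feasible N wmin alpha beta lambda Wm Wp nm np wm wp /\
              v = objective nm np wm wp)
  end.

(* Main.v *)
Require Import Defs.
From Stdlib Require Import Reals Lra Lia Classical.
From Coquelicot Require Import Coquelicot.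
Open Scope R_scope.

Definition P (p t : R) : R := if Rlt_dec 0 t then Rpower t p else 0.

Lemma P_le0 p t : t <= 0 -> P p t = 0.
Proof. intros; unfold P; destruct (Rlt_dec 0 t); [lra|auto]. Qed.
Lemma P_pos p t : 0 < t -> P p t = Rpower t p.
Proof. intros; unfold P; destruct (Rlt_dec 0 t); [auto|lra]. Qed.
Lemma P_gt0 p t : 0 < t -> 0 < P p t.
Proof. intros; rewrite P_pos; auto; unfold Rpower; apply exp_pos. Qed.
Lemma P_ge0 p t : 0 <= P p t.
Proof. destruct (Rlt_dec 0 t). left; apply P_gt0; auto. rewrite P_le0; lra. Qed.
Lemma P_one p : P p 1 = 1.
Proof. rewrite P_pos by lra. unfold Rpower; rewrite ln_1, Rmult_0_r; apply exp_0. Qed.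
Lemma P_id t : 0 <= t -> P 1 t = t.
Proof. intros [H|H]. rewrite P_pos; auto; apply Rpower_1; auto. subst; apply P_le0; lra. Qed.
Lemma P_mul p s t : 0 <= s -> 0 <= t -> P p (s * t) = P p s * P p t.
Proof.
  intros [Hs|Hs] [Ht|Ht].
  - rewrite !P_pos; auto. rewrite Rpower_mult_distr; auto. apply Rmult_lt_0_compat; auto.
  - subst. rewrite Rmult_0_r, !(P_le0 p 0); lra.
  - subst. rewrite Rmult_0_l, !(P_le0 p 0); lra.
  - subst. rewrite Rmult_0_l, !(P_le0 p 0); lra.
Qed.
Lemma P_comp p q t : 0 <= t -> P q (P p t) = P (p * q) t.
Proof.
  intros [Ht|Ht].
  - rewrite (P_pos p), (P_pos (p*q)); auto. rewrite P_pos. apply Rpower_mult.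
    rewrite <- (P_pos p); auto; apply P_gt0; auto.
  - subst. rewrite (P_le0 p 0), (P_le0 q 0), (P_le0 (p*q) 0); lra.
Qed.
Lemma P_add p q t : 0 <= t -> 0 < p -> 0 < q -> P (p + q) t = P p t * P q t.
Proof.
  intros [Ht|Ht] Hp Hq.
  - rewrite !P_pos; auto. apply Rpower_plus.
  - subst. rewrite !P_le0; lra.
Qed.
Lemma P_mono p s t : 0 <= p -> 0 <= s <= t -> P p s <= P p t.
Proof.
  intros Hp [[Hs|Hs] Hst].
  - rewrite !P_pos by lra. apply Rle_Rpower_l; lra.
  - subst. rewrite P_le0 by lra. apply P_ge0.
Qed.
Lemma exp_le x y : x <= y -> exp x <= exp y.
Proof. intros [H|H]. left; apply exp_increasing; auto. subst; lra. Qed.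
Lemma P_exp p q t : 0 <= t <= 1 -> 0 <= p <= q -> P q t <= P p t.
Proof.
  intros [[Ht|Ht] Ht1] Hpq.
  - rewrite !P_pos by lra. unfold Rpower. apply exp_le.
    assert (ln t <= 0) by (rewrite <- ln_1; apply ln_le; lra). nra.
  - subst. rewrite !P_le0; lra.
Qed.
Lemma P_le1 p t : 0 <= p -> 0 <= t <= 1 -> P p t <= 1.
Proof. intros. rewrite <- (P_one p). apply P_mono; lra. Qed.
Lemma P_ge_id p t : 0 <= p <= 1 -> 0 <= t <= 1 -> t <= P p t.
Proof. intros. rewrite <- (P_id t) at 1 by lra. apply P_exp; lra. Qed.
Lemma P_amgm p u : 0 <= p <= 1 -> 0 <= u -> P p u <= p * u + (1 - p).
Proof.
  intros Hp [Hu|Hu].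
  - rewrite P_pos by auto. unfold Rpower. set (m := p * ln u).
    assert (H1 : u >= exp m * (1 + ln u - m)).
    { pose proof (exp_ineq1_le (ln u - m)).
      assert (E : u = exp m * exp (ln u - m)).
      { rewrite <- exp_plus. replace (m + (ln u - m)) with (ln u) by ring. rewrite exp_ln; auto. }
      rewrite E at 1.
      pose proof (exp_pos m). nra. }
    assert (H2 : 1 >= exp m * (1 - m)).
    { pose proof (exp_ineq1_le (- m)).
      replace 1 with (exp m * exp (- m)) at 1.
      2:{ rewrite <- exp_plus. replace (m + - m) with 0 by ring. apply exp_0. }
      pose proof (exp_pos m). nra. }
    assert (p * u + (1 - p) >= exp m * (p * (1 + ln u - m) + (1 - p) * (1 - m))) by nra.
    replace (p * (1 + ln u - m) + (1 - p) * (1 - m)) with (1 + (p * ln u - m)) in H by ring.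
    unfold m in H at 2. lra.
  - subst. rewrite P_le0; lra.
Qed.
Lemma P_tangent p z w : 0 <= p <= 1 -> 0 < z -> 0 <= w -> P p w <= P p z * (p * w / z + (1 - p)).
Proof.
  intros Hp Hz Hw.
  replace w with (z * (w / z)) at 1 by (field; lra).
  rewrite P_mul by (try apply Rdiv_le_0_compat; lra).
  apply Rmult_le_compat_l. apply P_ge0.
  replace (p * w / z) with (p * (w / z)) by (field; lra).
  apply P_amgm; auto. apply Rdiv_le_0_compat; lra.
Qed.
Lemma P_concave p nu r : 0 < p <= 1 -> 0 <= nu <= 1 -> 0 <= r ->
  nu + (1 - nu) * P p r <= P p (nu + (1 - nu) * r).
Proof.
  intros Hp Hnu Hr. set (z := nu + (1 - nu) * r).
  destruct (Req_dec z 0) as [Hz|Hz].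
  - assert (nu = 0) by (unfold z in Hz; nra). subst nu.
    assert (r = 0) by (unfold z in Hz; lra). subst r. rewrite Hz, !P_le0; lra.
  - assert (Hz' : 0 < z) by (unfold z in *; nra).
    pose proof (P_tangent p z 1 ltac:(lra) Hz' ltac:(lra)) as T1.
    pose proof (P_tangent p z r ltac:(lra) Hz' Hr) as T2.
    rewrite P_one in T1.
    assert (E : nu * (p * 1 / z + (1 - p)) + (1 - nu) * (p * r / z + (1 - p)) = 1).
    { unfold z in *. field. auto. }
    pose proof (P_ge0 p z). nra.
Qed.
Lemma P_inv p t : 0 < p -> 0 <= t -> P p (P (1/p) t) = t.
Proof. intros. rewrite P_comp by auto. replace (1/p*p) with 1 by (field; lra). apply P_id; auto. Qed.
Lemma P_inv' p t : 0 < p -> 0 <= t -> P (1/p) (P p t) = t.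
Proof. intros. rewrite P_comp by auto. replace (p*(1/p)) with 1 by (field; lra). apply P_id; auto. Qed.

Lemma core p A B mu : 0 < p <= 1 -> 0 <= A <= B -> 0 <= mu <= 1 ->
  P p ((1 - mu) * A + mu * B) <= P p A * (1 - P p mu) + P p mu * P p B.
Proof.
  intros Hp HAB Hmu.
  destruct (Req_dec B 0) as [HB|HB].
  { assert (A = 0) by lra. subst. replace ((1 - mu) * 0 + mu * 0) with 0 by ring.
    rewrite P_le0 by lra. lra. }
  destruct (Req_dec mu 0) as [Hm|Hm].
  { subst. rewrite (P_le0 p 0) by lra. replace ((1 - 0) * A + 0 * B) with A by ring. lra. }
  assert (HB' : 0 < B) by lra. assert (Hm' : 0 < mu) by lra.
  set (r := A / B).
  assert (Hr : 0 <= r <= 1).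
  { unfold r; split. apply Rdiv_le_0_compat; lra.
    apply (Rmult_le_reg_r B); auto. unfold Rdiv. rewrite Rmult_assoc, Rinv_l; lra. }
  set (z := (1 - mu) * r + mu).
  assert (Hz : 0 < z) by (unfold z; nra).
  set (nu := (1 - mu) * r / z).
  assert (Hnu : 0 <= nu <= 1).
  { unfold nu; split. apply Rdiv_le_0_compat; nra.
    apply (Rmult_le_reg_r z); auto. unfold Rdiv. rewrite Rmult_assoc, Rinv_l; unfold z; nra. }
  pose proof (P_concave p nu r Hp Hnu ltac:(lra)) as H1.
  replace (nu + (1 - nu) * r) with (r / z) in H1 by (unfold nu, z in *; field; lra).
  assert (Hmz : 0 <= mu / z <= 1).
  { split. apply Rdiv_le_0_compat; lra.
    apply (Rmult_le_reg_r z); auto. unfold Rdiv. rewrite Rmult_assoc, Rinv_l; unfold z; nra. }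
  pose proof (P_ge_id p (mu / z) ltac:(lra) Hmz) as H2.
  assert (E1 : 1 - nu = mu / z) by (unfold nu, z in *; field; lra).
  pose proof (P_le1 p r ltac:(lra) Hr) as H3.
  assert (H4 : P p (r / z) + P p (mu / z) * (1 - P p r) >= 1).
  { rewrite <- E1 in *. nra. }
  assert (E2 : P p (r / z) * P p z = P p r).
  { rewrite <- P_mul. f_equal. field. lra. apply Rdiv_le_0_compat; lra. lra. }
  assert (E3 : P p (mu / z) * P p z = P p mu).
  { rewrite <- P_mul. f_equal. field. lra. apply Rdiv_le_0_compat; lra. lra. }
  pose proof (P_ge0 p z) as Hpz.
  assert (H5 : P p r + P p mu * (1 - P p r) >= P p z).
  { assert (H6 : P p (r/z) * P p z + P p (mu/z) * P p z * (1 - P p r) >= P p z) by nra.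
    rewrite E2, E3 in H6. lra. }
  assert (E4 : P p r * P p B = P p A).
  { rewrite <- P_mul by lra. f_equal. unfold r. field. lra. }
  assert (E5 : P p z * P p B = P p ((1 - mu) * A + mu * B)).
  { rewrite <- P_mul by lra. f_equal. unfold z, r. field. lra. }
  pose proof (P_ge0 p B) as HpB.
  rewrite <- E5, <- E4. nra.
Qed.

Lemma CL p q a b2 mu : 0 < q <= p -> p < 1 -> 0 <= a -> 0 <= b2 -> 0 <= mu <= 1 ->
  0 < a + P q mu * b2 ->
  (1 - mu) * P (1/p) (a / (a + P q mu * b2)) + mu * P (1/p) ((a + b2) / (a + P q mu * b2)) <= 1.
Proof.
  intros Hq Hp Ha Hb Hmu HS. set (S := a + P q mu * b2) in *.
  set (A := P (1/p) (a / S)). set (B := P (1/p) ((a + b2) / S)).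
  assert (Hp0 : 0 < 1/p) by (apply Rdiv_lt_0_compat; lra).
  assert (HaS : 0 <= a / S) by (apply Rdiv_le_0_compat; lra).
  assert (HbS : a / S <= (a + b2) / S) by (unfold Rdiv; apply Rmult_le_compat_r; [left; apply Rinv_0_lt_compat; auto|lra]).
  assert (HAB : 0 <= A <= B) by (split; [apply P_ge0| apply P_mono; lra]).
  pose proof (core p A B mu ltac:(lra) HAB Hmu) as H.
  unfold A, B in H. rewrite !P_inv in H by lra.
  pose proof (P_exp q p mu ltac:(lra) ltac:(lra)) as He.
  assert (H' : a / S * (1 - P p mu) + P p mu * ((a + b2) / S) <= 1).
  { replace (a / S * (1 - P p mu) + P p mu * ((a + b2) / S)) with ((a + P p mu * b2) / S) by (field; lra).
    apply (Rmult_le_reg_r S); auto. unfold Rdiv. rewrite Rmult_assoc, Rinv_l by lra. unfold S. nra. }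
  fold A B in H |- *.
  set (M := (1 - mu) * A + mu * B) in *.
  assert (HM : 0 <= M) by (unfold M; nra).
  rewrite <- (P_inv' p M) by lra. apply Rle_trans with (P (1/p) 1).
  apply P_mono; [lra|]. split; [apply P_ge0| lra]. rewrite P_one; lra.
Qed.
Lemma sumR_S n f : sumR (S n) f = sumR n f + f (S n).
Proof. reflexivity. Qed.
Lemma sumR_ext n f g : (forall i, (1 <= i <= n)%nat -> f i = g i) -> sumR n f = sumR n g.
Proof. induction n; simpl; intros H; auto. rewrite IHn, (H (S n)); auto; intros; try apply H; lia. Qed.
Lemma sumR_plus n f g : sumR n (fun i => f i + g i) = sumR n f + sumR n g.
Proof. induction n; simpl; [lra|]. rewrite IHn; ring. Qed.
Lemma sumR_scal n c f : sumR n (fun i => c * f i) = c * sumR n f.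
Proof. induction n; simpl; [lra|]. rewrite IHn; ring. Qed.
Lemma sumR_le n f g : (forall i, (1 <= i <= n)%nat -> f i <= g i) -> sumR n f <= sumR n g.
Proof. induction n; simpl; intros H; [lra|]. pose proof (H (S n) ltac:(lia)).
  assert (sumR n f <= sumR n g) by (apply IHn; intros; apply H; lia). lra. Qed.
Lemma sumR_nonneg n f : (forall i, (1 <= i <= n)%nat -> 0 <= f i) -> 0 <= sumR n f.
Proof. intros H. replace 0 with (sumR n (fun _ => 0)).
  apply sumR_le; auto. induction n; simpl; auto. rewrite IHn; [lra|]. intros; apply H; lia. Qed.
Lemma sumR_ge_term n f i : (forall i, (1 <= i <= n)%nat -> 0 <= f i) -> (1 <= i <= n)%nat -> f i <= sumR n f.
Proof. induction n; simpl; intros H Hi; [lia|].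
  destruct (Nat.eq_dec i (S n)). subst. pose proof (sumR_nonneg n f ltac:(intros; apply H; lia)). lra.
  pose proof (IHn ltac:(intros; apply H; lia) ltac:(lia)). pose proof (H (S n) ltac:(lia)). lra. Qed.
Lemma sumR_const n c : sumR n (fun _ => c) = INR n * c.
Proof. induction n; simpl sumR; [simpl; lra|]. rewrite IHn, S_INR; ring. Qed.
Lemma sumR_indic n m f : (m <= n)%nat -> sumR n (fun i => if (i <=? m)%nat then f i else 0) = sumR m f.
Proof. induction n; intros H.
  - assert (m = 0)%nat by lia. subst. reflexivity.
  - destruct (Nat.eq_dec m (S n)).
    + subst. apply sumR_ext. intros i Hi. destruct (Nat.leb_spec i (S n)); auto; lia.
    + rewrite sumR_S, IHn by lia. destruct (Nat.leb_spec (S n) m); [lia|]. ring. Qed.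
Lemma sumR_split r n f : sumR (r + n) f = sumR r f + sumR n (fun j => f (j + r)%nat).
Proof. induction n; simpl. rewrite Nat.add_0_r; ring.
  rewrite Nat.add_succ_r. simpl. rewrite IHn. replace (S (n + r)) with (S (r + n)) by lia. ring. Qed.
Lemma sumR_zero_le n f : (forall i, (1 <= i <= n)%nat -> 0 <= f i) -> sumR n f <= 0 ->
  forall i, (1 <= i <= n)%nat -> f i = 0.
Proof. intros H1 H2 i Hi. pose proof (sumR_ge_term n f i H1 Hi). pose proof (H1 i Hi). lra. Qed.
Lemma chain n (w : nat -> R) : (forall j, (1 <= j < n)%nat -> w j <= w (S j)) ->
  forall i j, (1 <= i <= j)%nat -> (j <= n)%nat -> w i <= w j.
Proof. intros H i j Hij Hjn. induction j. lia.
  destruct (Nat.eq_dec i (S j)). subst; lra.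
  apply Rle_trans with (w j). apply IHj; lia. apply H; lia. Qed.
Lemma div01 a b : 0 <= a <= b -> 0 < b -> 0 <= a / b <= 1.
Proof. intros. split. apply Rdiv_le_0_compat; lra.
  apply (Rmult_le_reg_r b); auto. unfold Rdiv. rewrite Rmult_assoc, Rinv_l; lra. Qed.

Lemma hm_pos N Wm i : weighting Wm -> (1 <= N)%nat -> (1 <= i <= N)%nat -> 0 < hminus Wm N i.
Proof.
  intros [[Hinc _] _] HN Hi. unfold hminus.
  assert (HN' : 1 <= INR N) by (apply (le_INR 1); lia).
  assert (Hi1 : 1 <= INR i) by (apply (le_INR 1); lia).
  assert (Hi2 : INR i <= INR N) by (apply le_INR; lia).
  assert (H := Hinc ((INR i - 1) / INR N) (INR i / INR N)
    ltac:(apply div01; lra) ltac:(apply div01; lra)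
    ltac:(unfold Rdiv; apply Rmult_lt_compat_r; [apply Rinv_0_lt_compat; lra| lra])).
  lra.
Qed.

Lemma hp_pos N Wp np j : weighting Wp -> (1 <= N)%nat -> (np <= N)%nat -> (1 <= j <= np)%nat -> 0 < hplus Wp N np j.
Proof.
  intros [[Hinc _] _] HN Hnp Hj. unfold hplus.
  assert (HN' : 1 <= INR N) by (apply (le_INR 1); lia).
  assert (Hj1 : 1 <= INR j) by (apply (le_INR 1); lia).
  assert (Hj2 : INR j <= INR np) by (apply le_INR; lia).
  assert (Hn2 : INR np <= INR N) by (apply le_INR; lia).
  assert (H := Hinc ((INR np - INR j) / INR N) ((INR np - INR j + 1) / INR N)
    ltac:(apply div01; lra) ltac:(apply div01; lra)
    ltac:(unfold Rdiv; apply Rmult_lt_compat_r; [apply Rinv_0_lt_compat; lra| lra])).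
  lra.
Qed.

Lemma U_neg a b l w : w <= 0 -> U a b l w = - l * P b (- w).
Proof. intros. unfold U, P. destruct (Rlt_dec 0 w); [lra|].
  destruct (Rlt_dec w 0); destruct (Rlt_dec 0 (-w)); try lra. Qed.
Lemma U_pos a b l y : 0 <= y -> U a b l y = P a y.
Proof. intros. unfold U, P. destruct (Rlt_dec 0 y); auto.
  destruct (Rlt_dec y 0); lra. Qed.

Definition Cm N Wm b l nm (wm : nat -> R) := l * sumR nm (fun i => hminus Wm N i * P b (- wm i)).
Definition Ap N Wp a np (wp : nat -> R) := sumR np (fun j => hplus Wp N np j * P a (wp j)).

Lemma sum_U_m N Wm a b l nm wm : (forall i, (1 <= i <= nm)%nat -> wm i <= 0) ->
  sumR nm (fun i => hminus Wm N i * U a b l (wm i)) = - Cm N Wm b l nm wm.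
Proof. intros H. unfold Cm. rewrite Ropp_mult_distr_l, <- sumR_scal. apply sumR_ext.
  intros i Hi. rewrite U_neg by auto. ring. Qed.
Lemma sum_U_p N Wp a b l np wp : (forall j, (1 <= j <= np)%nat -> 0 <= wp j) ->
  sumR np (fun j => hplus Wp N np j * U a b l (wp j)) = Ap N Wp a np wp.
Proof. intros H. unfold Ap. apply sumR_ext. intros j Hj. rewrite U_pos by auto. ring. Qed.

Lemma feas_intro N wmin a b l Wm Wp nm np wm wp :
  (forall i, (1 <= i <= nm)%nat -> wmin <= wm i <= 0) ->
  (forall i, (1 <= i < nm)%nat -> wm i <= wm (S i)) ->
  (forall j, (1 <= j <= np)%nat -> 0 <= wp j) ->
  (forall j, (1 <= j < np)%nat -> wp j <= wp (S j)) ->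
  Ap N Wp a np wp >= Cm N Wm b l nm wm ->
  feasible N wmin a b l Wm Wp nm np wm wp.
Proof.
  intros H1 H2 H3 H4 H5. unfold feasible.
  rewrite sum_U_m by (intros; apply H1; auto). rewrite sum_U_p by auto.
  split; [lra|]. split; [intros; apply H3; lia|]. split; [auto|].
  split; [|auto]. intros. split; apply H1; lia.
Qed.

Lemma feas_elim N wmin a b l Wm Wp nm np wm wp :
  feasible N wmin a b l Wm Wp nm np wm wp ->
  (forall i, (1 <= i <= nm)%nat -> wmin <= wm i <= 0) /\
  (forall i, (1 <= i < nm)%nat -> wm i <= wm (S i)) /\
  (forall j, (1 <= j <= np)%nat -> 0 <= wp j) /\
  (forall j, (1 <= j < np)%nat -> wp j <= wp (S j)) /\
  Ap N Wp a np wp >= Cm N Wm b l nm wm.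
Proof.
  intros (H1 & H2 & H3 & H4 & H5).
  assert (Hm : forall i, (1 <= i <= nm)%nat -> wmin <= wm i <= 0).
  { intros i Hi. destruct (H4 ltac:(lia)) as [Ha Hb]. split.
    apply Rle_trans with (wm 1%nat); auto. apply (chain nm); auto; lia.
    apply Rle_trans with (wm nm); auto. apply (chain nm); auto; lia. }
  assert (Hp : forall j, (1 <= j <= np)%nat -> 0 <= wp j).
  { intros j Hj. apply Rle_trans with (wp 1%nat). apply H2; lia. apply (chain np); auto; lia. }
  repeat split; auto; try (apply Hm; auto).
  rewrite sum_U_m, sum_U_p in H1 by (auto; intros; apply Hm; auto). lra.
Qed.
Lemma hp_shift N Wp r np j : hplus Wp N (r + np) (j + r) = hplus Wp N np j.
Proof. unfold hplus. replace (INR (r + np) - INR (j + r)) with (INR np - INR j) by (rewrite !plus_INR; ring). reflexivity. Qed.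

Lemma improve N Wp a np r T y : 0 < a < 1 -> weighting Wp -> (1 <= N)%nat -> (1 <= r)%nat ->
  (r + np <= N)%nat -> T > 0 ->
  (forall j, (1 <= j <= np)%nat -> 0 <= y j) ->
  (forall j, (1 <= j < np)%nat -> y j <= y (S j)) ->
  Ap N Wp a np y >= T ->
  exists y2, (forall j, (1 <= j <= r + np)%nat -> 0 <= y2 j) /\
    (forall j, (1 <= j < r + np)%nat -> y2 j <= y2 (S j)) /\
    Ap N Wp a (r + np) y2 >= T /\ sumR (r + np) y2 < sumR np y.
Proof.
  intros Ha HW HN Hr HrN HT Hy0 Hym HA.
  set (Y := sumR np y).
  assert (HY : 0 < Y).
  { destruct (Rlt_dec 0 Y) as [?|HY]; auto. exfalso.
    assert (Z := sumR_zero_le np y Hy0 ltac:(fold Y; lra)).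
    assert (Ap N Wp a np y = 0).
    { unfold Ap. rewrite (sumR_ext np _ (fun _ => 0)). rewrite sumR_const; ring.
      intros j Hj. rewrite Z by auto. rewrite P_le0 by lra. ring. }
    lra. }
  set (h := hplus Wp N (r + np) 1).
  assert (Hh : 0 < h) by (apply hp_pos; auto; lia).
  set (K1 := h / T). assert (HK1 : 0 < K1) by (apply Rdiv_lt_0_compat; lra).
  set (R := INR (r + np)). assert (HR : 1 <= R) by (apply (le_INR 1); lia).
  set (s2 := P (a / (1 - a)) (K1 * Y / (2 * R))).
  assert (Hs2 : 0 < s2) by (apply P_gt0; apply Rdiv_lt_0_compat; nra).
  set (s := Rmin (1 / (2 * K1)) s2).
  assert (Hs : 0 < s) by (apply Rmin_pos; auto; apply Rdiv_lt_0_compat; lra).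
  assert (Hs1 : s <= 1 / (2 * K1)) by apply Rmin_l.
  assert (Hs2' : s <= s2) by apply Rmin_r.
  set (eps := P (1 / a) s).
  set (del := K1 * s).
  assert (Hdel : 0 < del <= 1/2).
  { unfold del; split. nra. apply Rmult_le_compat_l with (r := K1) in Hs1; [|lra].
    replace (K1 * (1 / (2 * K1))) with (1/2) in Hs1 by (field; lra). lra. }
  set (d := P (1 / a) (1 - del)).
  assert (Hd0 : 0 <= d) by apply P_ge0.
  assert (F1 : P a eps = s) by (apply P_inv; lra).
  assert (F2 : P a d = 1 - del) by (apply P_inv; lra).
  assert (F3 : d <= 1 - del).
  { unfold d. rewrite <- (P_id (1 - del)) at 2 by lra. apply P_exp. lra.
    split; [lra|]. apply (Rmult_le_reg_r a); [lra|]. unfold Rdiv; rewrite Rmult_assoc, Rinv_l; lra. }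
  assert (Hq : 0 < (1 - a) / a) by (apply Rdiv_lt_0_compat; lra).
  assert (F4 : eps = s * P ((1 - a) / a) s).
  { unfold eps. replace (1 / a) with (1 + (1 - a) / a) by (field; lra).
    rewrite P_add by lra. rewrite P_id by lra. reflexivity. }
  assert (F5 : P ((1 - a) / a) s <= K1 * Y / (2 * R)).
  { apply Rle_trans with (P ((1 - a) / a) s2). apply P_mono; lra.
    unfold s2. rewrite P_comp. replace (a / (1 - a) * ((1 - a) / a)) with 1 by (field; lra).
    rewrite P_id. lra. apply Rdiv_le_0_compat; nra. apply Rdiv_le_0_compat; nra. }
  assert (Heps : 0 < eps) by (apply P_gt0; auto).
  exists (fun j => if (j <=? r)%nat then eps else eps + d * y (j - r)%nat).
  split; [|split; [|split]].
  - intros j Hj. destruct (Nat.leb_spec j r). lra.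
    pose proof (Hy0 (j - r)%nat ltac:(lia)). nra.
  - intros j Hj. destruct (Nat.leb_spec j r); destruct (Nat.leb_spec (S j) r).
    + lra.
    + pose proof (Hy0 (S j - r)%nat ltac:(lia)). nra.
    + lia.
    + replace (S j - r)%nat with (S (j - r)) by lia.
      pose proof (Hym (j - r)%nat ltac:(lia)). nra.
  - unfold Ap. rewrite sumR_split.
    assert (G1 : h * s <= sumR r (fun j => hplus Wp N (r + np) j *
                     P a (if (j <=? r)%nat then eps else eps + d * y (j - r)%nat))).
    { apply Rle_trans with (hplus Wp N (r + np) 1 * P a (if (1 <=? r)%nat then eps else eps + d * y (1 - r)%nat)).
      destruct (Nat.leb_spec 1 r); [|lia]. rewrite F1. unfold h. lra.
      apply (sumR_ge_term r (fun j => hplus Wp N (r + np) j *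
                     P a (if (j <=? r)%nat then eps else eps + d * y (j - r)%nat))); [|lia].
      intros i Hi. apply Rmult_le_pos. left; apply hp_pos; auto; lia. apply P_ge0. }
    assert (G2 : (1 - del) * Ap N Wp a np y <= sumR np (fun j => hplus Wp N (r + np) (j + r) *
                     P a (if (j + r <=? r)%nat then eps else eps + d * y (j + r - r)%nat))).
    { unfold Ap. rewrite <- F2, <- sumR_scal. apply sumR_le. intros j Hj.
      rewrite hp_shift. destruct (Nat.leb_spec (j + r) r); [lia|].
      replace (j + r - r)%nat with j by lia.
      pose proof (hp_pos N Wp np j HW HN ltac:(lia) Hj). pose proof (Hy0 j Hj).
      assert (P a d * P a (y j) = P a (d * y j)) by (rewrite P_mul; lra).
      assert (P a (d * y j) <= P a (eps + d * y j)) by (apply P_mono; nra).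
      pose proof (P_ge0 a (y j)). pose proof (P_ge0 a d). nra. }
    assert (E : K1 * T = h) by (unfold K1; field; lra).
    assert (1 - del >= 0) by lra.
    assert ((1 - del) * Ap N Wp a np y >= (1 - del) * T) by (apply Rmult_ge_compat_l; lra).
    unfold del in *. nra.
  - rewrite sumR_split.
    rewrite (sumR_ext r _ (fun _ => eps)).
    2:{ intros j Hj. destruct (Nat.leb_spec j r); [auto|lia]. }
    rewrite (sumR_ext np _ (fun j => eps + d * y j)).
    2:{ intros j Hj. destruct (Nat.leb_spec (j + r) r); [lia|]. f_equal. f_equal. f_equal. lia. }
    rewrite sumR_plus, sumR_scal, !sumR_const. fold Y.
    assert (INR r * eps + INR np * eps = R * eps) by (unfold R; rewrite plus_INR; ring).
    assert (R * eps <= s * (K1 * Y / 2)).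
    { rewrite F4. replace (s * (K1 * Y / 2)) with (R * s * (K1 * Y / (2 * R))) by (field; lra).
      replace (R * (s * P ((1 - a) / a) s)) with ((R * s) * P ((1 - a) / a) s) by ring.
      apply Rmult_le_compat_l; nra. }
    assert (d * Y <= (1 - del) * Y) by nra.
    unfold del in *. nra.
Qed.
Lemma first_index (Q : nat -> Prop) n : Q n -> exists k, Q k /\ forall j, (j < k)%nat -> ~ Q j.
Proof.
  induction n as [n IH] using (well_founded_induction Wf_nat.lt_wf). intros Hn.
  destruct (classic (exists j, (j < n)%nat /\ Q j)) as [[j [Hj Qj]]|H].
  - exact (IH j Hj Qj).
  - exists n. split; auto. intros j Hj Qj. apply H; eauto.
Qed.

Lemma Phi_ge N wmin a b l Wm Wp nm np wm wp : (1 <= nm)%nat -> (1 <= np)%nat ->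
  feasible N wmin a b l Wm Wp nm np wm wp ->
  Rbar_le (Finite (objective nm np wm wp)) (Phi N wmin a b l Wm Wp nm np).
Proof.
  intros H1 H2 Hf. destruct nm as [|nm]; [lia|]. destruct np as [|np]; [lia|].
  simpl Phi. apply (proj1 (Lub_Rbar_correct _)). eauto.
Qed.

Lemma Phi_le N wmin a b l Wm Wp nm np V : (1 <= nm)%nat -> (1 <= np)%nat ->
  (forall wm wp, feasible N wmin a b l Wm Wp nm np wm wp -> objective nm np wm wp <= V) ->
  Rbar_le (Phi N wmin a b l Wm Wp nm np) (Finite V).
Proof.
  intros H1 H2 Hf. destruct nm as [|nm]; [lia|]. destruct np as [|np]; [lia|].
  simpl Phi. apply (proj2 (Lub_Rbar_correct _)). intros v [wm [wp [Hv ->]]]. simpl. auto.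
Qed.

Lemma scale_Ap N Wp a np wp c : 0 <= c -> (forall j, (1 <= j <= np)%nat -> 0 <= wp j) ->
  Ap N Wp a np (fun j => c * wp j) = P a c * Ap N Wp a np wp.
Proof. intros Hc H. unfold Ap. rewrite <- sumR_scal. apply sumR_ext. intros j Hj.
  rewrite P_mul by auto. ring. Qed.

Lemma Rinv_nn x : 0 <= x -> 0 <= / x.
Proof. intros [H|H]. left; apply Rinv_0_lt_compat; auto. subst; rewrite Rinv_0; lra. Qed.
Theorem proposition5 (N : nat) (wmin alpha beta lambda : R) (Wm Wp : R -> R)
  (HN : (1 <= N)%nat) (Hwmin : wmin < 0)
  (Halpha : 0 < alpha < 1) (Hbeta : 0 < beta < 1) (Hlambda : 0 < lambda)
  (HWm : weighting Wm) (HWp : weighting Wp)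
  (Hab : alpha >= beta)
  (nms nps : nat) (Hsum : (nms + nps)%nat = N)
  (Hopt : forall nm np, (nm + np)%nat = N ->
     Rbar_le (Phi N wmin alpha beta lambda Wm Wp nm np)
             (Phi N wmin alpha beta lambda Wm Wp nms nps))
  (Hpos : Rbar_lt (Finite 0) (Phi N wmin alpha beta lambda Wm Wp nms nps))
  (wms wps : nat -> R)
  (Hw : is_global_opt N wmin alpha beta lambda Wm Wp nms nps wms wps) :
  forall i, (1 <= i <= nms)%nat -> wms i = wmin.
Proof.
  intros i0 Hi0. destruct (Req_dec (wms i0) wmin) as [He|Hne]; auto. exfalso.
  destruct Hw as [Hf Hmax].
  destruct (feas_elim _ _ _ _ _ _ _ _ _ _ _ Hf) as (Hrm & Hmm & Hrp & Hmp & HAC).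
  assert (Hnp : (1 <= nps)%nat).
  { destruct nps; [|lia]. destruct nms; simpl in Hpos; lra. }
  set (X := - wmin).
  set (V := objective nms nps wms wps).
  assert (HPV : Rbar_le (Phi N wmin alpha beta lambda Wm Wp nms nps) (Finite V))
    by (apply Phi_le; auto; lia).
  assert (HV : 0 < V).
  { assert (H := Rbar_lt_le_trans _ _ _ Hpos HPV). simpl in H. auto. }
  set (Y := sumR nps wps).
  assert (HY : 0 <= Y) by (apply sumR_nonneg; auto).
  destruct (first_index (fun j => (1 <= j <= nms)%nat /\ wms j <> wmin) i0 (conj Hi0 Hne))
    as [k [[Hk Hkne] Hfirst]].
  assert (Hbef : forall j, (1 <= j < k)%nat -> wms j = wmin).
  { intros j Hj. destruct (Req_dec (wms j) wmin); auto. exfalso. apply (Hfirst j). lia. split; auto; lia. }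
  set (m := (k - 1)%nat).
  set (mu := wms k / wmin).
  assert (Hmuw : mu * wmin = wms k) by (unfold mu; field; lra).
  assert (Hwk := Hrm k Hk).
  assert (Hmu : 0 <= mu < 1) by (split; nra).
  assert (Hmi : 0 <= / mu) by (apply Rinv_nn; lra).
  assert (Htail : forall i, (k <= i <= nms)%nat -> wms k <= wms i) by (intros; apply (chain nms); auto; lia).
  set (wm1 := fun i => if (i <=? m)%nat then wmin else 0).
  set (wm2 := fun i => if (i <=? m)%nat then wmin else wms i / mu).
  set (D := fun i => if (i <=? m)%nat then X else 0).
  set (E := fun i => if (i <=? m)%nat then 0 else - (wms i / mu)).
  assert (HE0 : forall i, (1 <= i <= nms)%nat -> 0 <= E i).
  { intros i Hi. unfold E. destruct (Nat.leb_spec i m). lra.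
    pose proof (Hrm i Hi). unfold Rdiv. rewrite Ropp_mult_distr_l. apply Rmult_le_pos; lra. }
  assert (Ptail : forall i, (1 <= i <= nms)%nat -> (m < i)%nat -> - wms i = mu * E i).
  { intros i Hi Hm. unfold E. destruct (Nat.leb_spec i m); [lia|].
    destruct (Req_dec mu 0) as [Hz|Hz].
    - rewrite Hz in Hmuw. pose proof (Htail i ltac:(lia)). pose proof (Hrm i Hi).
      assert (Hwi : wms i = 0) by lra. rewrite Hwi. unfold Rdiv. ring.
    - field. auto. }
  assert (Pa : forall i, (1 <= i <= nms)%nat -> - wm1 i = D i).
  { intros i Hi. unfold wm1, D. destruct (Nat.leb_spec i m); unfold X; lra. }
  assert (Pb : forall i, (1 <= i <= nms)%nat -> - wm2 i = D i + E i).
  { intros i Hi. unfold wm2, D, E. destruct (Nat.leb_spec i m); unfold X; lra. }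
  assert (Pc : forall i, (1 <= i <= nms)%nat -> - wms i = D i + mu * E i).
  { intros i Hi. destruct (Nat.leb_spec i m).
    - unfold D, E. destruct (Nat.leb_spec i m); [|lia]. rewrite Hbef by lia. unfold X; ring.
    - rewrite Ptail by auto. unfold D. destruct (Nat.leb_spec i m); [lia|]. ring. }
  assert (Pd : forall i, (1 <= i <= nms)%nat -> P beta (- wm2 i) = P beta (D i) + P beta (E i)).
  { intros i Hi. rewrite Pb by auto. unfold D, E. destruct (Nat.leb_spec i m).
    - rewrite (P_le0 beta 0) by lra. rewrite !Rplus_0_r; auto.
    - rewrite (P_le0 beta 0) by lra. rewrite !Rplus_0_l; auto. }
  assert (Pe : forall i, (1 <= i <= nms)%nat -> P beta (- wms i) = P beta (D i) + P beta mu * P beta (E i)).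
  { intros i Hi. rewrite Pc by auto. pose proof (HE0 i Hi). unfold D, E in *. destruct (Nat.leb_spec i m).
    - rewrite (P_le0 beta 0) by lra. replace (X + mu * 0) with X by ring. ring.
    - rewrite (P_le0 beta 0) by lra. rewrite Rplus_0_l, P_mul by lra. ring. }
  assert (Pf : forall i, (1 <= i <= nms)%nat -> P beta (- wm1 i) = P beta (D i)).
  { intros i Hi. rewrite Pa; auto. }
  set (a_ := lambda * sumR nms (fun i => hminus Wm N i * P beta (D i))).
  set (b2 := lambda * sumR nms (fun i => hminus Wm N i * P beta (E i))).
  assert (Ha0 : 0 <= a_).
  { apply Rmult_le_pos; [lra|]. apply sumR_nonneg. intros. apply Rmult_le_pos.
    left; apply hm_pos; auto; lia. apply P_ge0. }
  assert (Hb0 : 0 <= b2).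
  { apply Rmult_le_pos; [lra|]. apply sumR_nonneg. intros. apply Rmult_le_pos.
    left; apply hm_pos; auto; lia. apply P_ge0. }
  assert (C1 : Cm N Wm beta lambda nms wm1 = a_).
  { unfold Cm, a_. f_equal. apply sumR_ext. intros. rewrite Pf; auto. }
  assert (C2 : Cm N Wm beta lambda nms wm2 = a_ + b2).
  { unfold Cm, a_, b2. rewrite <- Rmult_plus_distr_l, <- sumR_plus. f_equal. apply sumR_ext.
    intros. rewrite Pd; auto. ring. }
  set (Sv := a_ + P beta mu * b2).
  assert (C0 : Cm N Wm beta lambda nms wms = Sv).
  { unfold Cm, Sv, a_, b2.
    rewrite (sumR_ext nms _ (fun i => hminus Wm N i * P beta (D i) + P beta mu * (hminus Wm N i * P beta (E i)))).
    rewrite sumR_plus, sumR_scal. ring. intros. rewrite Pe; auto. ring. }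
  assert (Hw1 : wms 1%nat < 0).
  { destruct (Rlt_dec (wms 1%nat) 0) as [?|Hn]; auto. exfalso.
    assert (Z : forall i, (1 <= i <= nms)%nat -> wms i = 0).
    { intros i Hi. pose proof (Hrm i Hi). pose proof (chain nms wms Hmm 1 i ltac:(lia) ltac:(lia)). lra. }
    assert (objective nms nps wms wps <= 0).
    { unfold objective. rewrite (sumR_ext nms _ (fun _ => 0)), sumR_const.
      change (sumR nps (fun j => wps j)) with Y. lra. intros. rewrite Z; auto; ring. }
    fold V in H. lra. }
  assert (HS : 0 < Sv).
  { rewrite <- C0. unfold Cm. apply Rmult_lt_0_compat; auto.
    apply Rlt_le_trans with (hminus Wm N 1 * P beta (- wms 1%nat)).
    apply Rmult_lt_0_compat. apply hm_pos; auto; lia. apply P_gt0; lra.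
    apply (sumR_ge_term nms (fun i => hminus Wm N i * P beta (- wms i))); [|lia].
    intros. apply Rmult_le_pos. left; apply hm_pos; auto; lia. apply P_ge0. }
  set (c1 := P (1 / alpha) (a_ / Sv)).
  set (c2 := P (1 / alpha) ((a_ + b2) / Sv)).
  assert (Hc1 : 0 <= c1) by apply P_ge0.
  assert (Hc2 : 0 <= c2) by apply P_ge0.
  assert (HA : Ap N Wp alpha nps wps >= Sv) by (rewrite <- C0; auto).
  assert (Hfeas1 : feasible N wmin alpha beta lambda Wm Wp nms nps wm1 (fun j => c1 * wps j)).
  { apply feas_intro.
    - intros i Hi. unfold wm1. destruct (Nat.leb_spec i m); lra.
    - intros i Hi. unfold wm1. destruct (Nat.leb_spec i m); destruct (Nat.leb_spec (S i) m); try lra; lia.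
    - intros j Hj. pose proof (Hrp j Hj). nra.
    - intros j Hj. pose proof (Hmp j Hj). nra.
    - rewrite scale_Ap by auto. unfold c1. rewrite P_inv by (try apply Rdiv_le_0_compat; lra).
      rewrite C1. apply Rle_ge. apply Rle_trans with (a_ / Sv * Sv).
      right; field; lra. apply Rmult_le_compat_l; [apply Rdiv_le_0_compat|]; lra. }
  assert (Hfeas2 : feasible N wmin alpha beta lambda Wm Wp nms nps wm2 (fun j => c2 * wps j)).
  { apply feas_intro.
    - intros i Hi. unfold wm2. destruct (Nat.leb_spec i m). lra.
      pose proof (Hrm i Hi). split.
      + destruct (Req_dec mu 0) as [Hz|Hz].
        * rewrite Hz. unfold Rdiv. rewrite Rinv_0. lra.
        * apply (Rmult_le_reg_r mu); [lra|]. unfold Rdiv. rewrite Rmult_assoc, Rinv_l by auto.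
          pose proof (Htail i ltac:(lia)). nra.
      + unfold Rdiv. nra.
    - intros i Hi. unfold wm2. destruct (Nat.leb_spec i m); destruct (Nat.leb_spec (S i) m).
      + lra.
      + assert (S i = k) by (unfold m in *; lia). subst k.
        destruct (Req_dec mu 0) as [Hz|Hz].
        * rewrite Hz. unfold Rdiv. rewrite Rinv_0. lra.
        * rewrite <- Hmuw. right. field. auto.
      + lia.
      + unfold Rdiv. apply Rmult_le_compat_r; [auto| apply Hmm; lia].
    - intros j Hj. pose proof (Hrp j Hj). nra.
    - intros j Hj. pose proof (Hmp j Hj). nra.
    - rewrite scale_Ap by auto. unfold c2. rewrite P_inv by (try apply Rdiv_le_0_compat; lra).
      rewrite C2. apply Rle_ge. apply Rle_trans with ((a_ + b2) / Sv * Sv).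
      right; field; lra. apply Rmult_le_compat_l; [apply Rdiv_le_0_compat|]; lra. }
  assert (HD : sumR nms D = INR m * X).
  { unfold D. rewrite sumR_indic by (unfold m; lia). apply sumR_const. }
  assert (O1 : objective nms nps wm1 (fun j => c1 * wps j) = sumR nms D - c1 * Y).
  { unfold objective. rewrite sumR_scal. f_equal. apply sumR_ext. intros. rewrite <- Pa; auto. }
  assert (O2 : objective nms nps wm2 (fun j => c2 * wps j) = sumR nms D + sumR nms E - c2 * Y).
  { unfold objective. rewrite sumR_scal, <- sumR_plus. f_equal. apply sumR_ext. intros. rewrite <- Pb; auto. }
  assert (O0 : V = sumR nms D + mu * sumR nms E - Y).
  { unfold V, objective. change (sumR nps (fun j => wps j)) with Y. rewrite <- sumR_scal, <- sumR_plus. f_equal. apply sumR_ext. intros. rewrite <- Pc; auto. }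
  assert (HCL : (1 - mu) * c1 + mu * c2 <= 1).
  { unfold c1, c2, Sv. unfold Sv in HS. apply CL; lra. }
  pose proof (Hmax _ _ Hfeas2) as H2. rewrite O2 in H2. fold V in H2.
  assert (Hcomb : (1 - mu) * (sumR nms D - c1 * Y) + mu * (sumR nms D + sumR nms E - c2 * Y) >= V).
  { rewrite O0. assert (((1 - mu) * c1 + mu * c2) * Y <= Y) by nra. nra. }
  assert (HO1 : sumR nms D - c1 * Y >= V).
  { assert ((1 - mu) * (sumR nms D - c1 * Y) >= (1 - mu) * V) by nra.
    apply Rle_ge. apply (Rmult_le_reg_l (1 - mu)); lra. }
  rewrite HD in HO1.
  destruct (Nat.eq_dec m 0) as [Hm0|Hm0].
  { rewrite Hm0 in HO1. simpl in HO1. nra. }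
  set (r := (nms - m)%nat).
  assert (HT : 0 < a_).
  { unfold a_. apply Rmult_lt_0_compat; auto.
    apply Rlt_le_trans with (hminus Wm N 1 * P beta (D 1%nat)).
    apply Rmult_lt_0_compat. apply hm_pos; auto; lia. apply P_gt0. unfold D.
    destruct (Nat.leb_spec 1 m); [|lia]. unfold X; lra.
    apply (sumR_ge_term nms (fun i => hminus Wm N i * P beta (D i))); [|lia].
    intros. apply Rmult_le_pos. left; apply hm_pos; auto; lia. apply P_ge0. }
  assert (HA1 : Ap N Wp alpha nps (fun j => c1 * wps j) >= a_).
  { destruct (feas_elim _ _ _ _ _ _ _ _ _ _ _ Hfeas1) as (_ & _ & _ & _ & Hx). rewrite C1 in Hx. auto. }
  destruct (improve N Wp alpha nps r a_ (fun j => c1 * wps j) Halpha HWp HN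
              ltac:(unfold r, m; lia) ltac:(unfold r, m; lia) HT
              ltac:(intros j Hj; pose proof (Hrp j Hj); nra)
              ltac:(intros j Hj; pose proof (Hmp j Hj); nra) HA1)
    as [y2 (Hy0 & Hym & HyA & Hycost)].
  assert (Hfeas3 : feasible N wmin alpha beta lambda Wm Wp m (r + nps) (fun _ => wmin) y2).
  { apply feas_intro; auto.
    - intros; lra.
    - intros; lra.
    - replace (Cm N Wm beta lambda m (fun _ => wmin)) with a_; auto.
      unfold Cm, a_. f_equal. unfold D.
      rewrite (sumR_ext nms _ (fun i => if (i <=? m)%nat then hminus Wm N i * P beta X else 0)).
      rewrite sumR_indic by (unfold m; lia). apply sumR_ext. intros. fold X. auto.
      intros i Hi. destruct (Nat.leb_spec i m); auto. rewrite P_le0 by lra. ring. }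
  assert (Hobj3 : objective m (r + nps) (fun _ => wmin) y2 > V).
  { unfold objective. rewrite sumR_const. rewrite sumR_scal in Hycost. fold Y in Hycost.
    fold X. change (sumR (r + nps) (fun j => y2 j)) with (sumR (r + nps) y2). lra. }
  assert (H3 := Phi_ge N wmin alpha beta lambda Wm Wp m (r + nps) _ _ ltac:(lia) ltac:(lia) Hfeas3).
  assert (H4 := Hopt m (r + nps)%nat ltac:(unfold r, m; lia)).
  assert (H5 := Rbar_le_trans _ _ _ (Rbar_le_trans _ _ _ H3 H4) HPV).
  simpl in H5. lra.
Qed.
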